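(* Let $n \in\mathbb N$ and $F\colon\mathbb R_+^n \to \mathbb R_+$. If $F$ is amenable and there exists $c>0$ such that $F(\mathbf a)\in [c,2c]$ for all $\mathbf a \in\mathbb R_+^n \setminus \{(0,\dots,0)\}$, then $F\in P_{BM}^n$.
   Context: $\mathbb R_+=[0,\infty)$. $F$ is amenable if $F(\mathbf x)=0\iff\mathbf x=(0,\dots,0)$. A b-metric on $X$ is $d\colon X^2\to\mathbb R_+$ with $d(x,y)=0\iff x=y$, $d(x,y)=d(y,x)$, and for some $K\geqslant1$, $d(x,z)\leqslant K(d(x,y)+d(y,z))$ for all $x,y,z$; a metric is a b-metric with $K=1$. $P^n_{BM}$ is the set of $F\colon\mathbb R_+^n\to\mathbb R_+$ such that for every collection of b-metric spaces $(X_i,d_i)$, $i=1,\dots,n$ (arbitrary constants), the function $D(\mathbf x,\mathbf y)=F(d_1(x_1,y_1),\dots,d_n(x_n,y_n))$ on $\prod_{i=1}^nX_i$ is a metric. *)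

(* Defs.v *)
From mathcomp Require Import ssreflect ssrbool eqtype ssrnat fintype.
From Stdlib Require Import Reals.
Set Implicit Arguments.
Unset Strict Implicit.
Open Scope R_scope.

(* R_+^n is modelled as functions 'I_n -> R with all coordinates >= 0. *)
Definition nonneg_vec (n : nat) (a : 'I_n -> R) : Prop := forall i, 0 <= a i.

(* F : R_+^n -> R_+ : F maps nonnegative vectors to nonnegative reals
   (values of F outside R_+^n are irrelevant). *)
Definition maps_to_Rplus (n : nat) (F : ('I_n -> R) -> R) : Prop :=
  forall a : 'I_n -> R, nonneg_vec a -> 0 <= F a.

Definition amenable (n : nat) (F : ('I_n -> R) -> R) : Prop :=
  forall a : 'I_n -> R, nonneg_vec a -> (F a = 0 <-> forall i, a i = 0).

Definition is_bmetric (X : Type) (d : X -> X -> R) : Prop :=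
  (forall x y, 0 <= d x y) /\
  (forall x y, d x y = 0 <-> x = y) /\
  (forall x y, d x y = d y x) /\
  (exists K, 1 <= K /\ forall x y z, d x z <= K * (d x y + d y z)).

Definition is_metric (X : Type) (d : X -> X -> R) : Prop :=
  (forall x y, 0 <= d x y) /\
  (forall x y, d x y = 0 <-> x = y) /\
  (forall x y, d x y = d y x) /\
  (forall x y z, d x z <= d x y + d y z).

Definition P_BM (n : nat) (F : ('I_n -> R) -> R) : Prop :=
  forall (X : 'I_n -> Type) (d : forall i, X i -> X i -> R),
    (forall i, is_bmetric (d i)) ->
    is_metric (fun (x y : forall i, X i) => F (fun i => d i (x i) (y i))).

(* Main.v *)
Require Import Defs.
From mathcomp Require Import ssreflect ssrbool eqtype ssrnat fintype.
From Stdlib Require Import Reals Lra Classical FunctionalExtensionality.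
Open Scope R_scope.

Theorem corollary3p2 (n : nat) (F : ('I_n -> R) -> R) :
  maps_to_Rplus F ->
  amenable F ->
  (exists c, 0 < c /\
     forall a : 'I_n -> R, nonneg_vec a -> ~ (forall i, a i = 0) ->
       c <= F a <= 2 * c) ->
  P_BM F.
Proof.
  move=> Hp Ham [c [Hc Hb]] X d Hd.
  set v := fun (x y : forall i, X i) => (fun i => d i (x i) (y i)).
  have Hnn : forall x y, nonneg_vec (v x y).
    by move=> x y i; rewrite /v; case: (Hd i) => H _; apply: H.
  have Hz : forall x y, F (v x y) = 0 <-> x = y.
    move=> x y; rewrite (Ham _ (Hnn x y)); split.
    - move=> H; apply: functional_extensionality_dep => i.
      by case: (Hd i) => _ [H2 _]; apply/H2; apply: H.
    - by move=> -> i; case: (Hd i) => _ [H2 _]; apply/H2.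
  have Hge : forall x y, x <> y -> c <= F (v x y) <= 2 * c.
    move=> x y Hxy; apply: Hb; first by apply: Hnn.
    by move=> H; apply: Hxy; apply/Hz; apply/Ham; [apply: Hnn|].
  change (is_metric (fun x y => F (v x y))).
  split; [|split; [|split]].
  - by move=> x y; apply: Hp; apply: Hnn.
  - exact: Hz.
  - move=> x y; congr F; apply: functional_extensionality => i.
    by rewrite /v; case: (Hd i) => _ [_ [H _]]; apply: H.
  - move=> x y z.
    have P0 : forall a b, 0 <= F (v a b) by move=> a b; apply: Hp; apply: Hnn.
    case: (classic (x = z)) => [<-|Hxz].
      by have := proj2 (Hz x x) (@Logic.eq_refl _ x); have := P0 x y; have := P0 y x; lra.
    case: (classic (x = y)) => [<-|Hxy].
      by have := proj2 (Hz x x) (@Logic.eq_refl _ x); lra.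
    case: (classic (y = z)) => [<-|Hyz].
      by have := proj2 (Hz y y) (@Logic.eq_refl _ y); lra.
    have := Hge _ _ Hxz; have := Hge _ _ Hxy; have := Hge _ _ Hyz; lra.
Qed.
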